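(* Let $G$ and $H$ be convergence groups with $G$ $g$-barrelled, and let $L$ be a locally quasi-convex topological group. Then every separately continuous bihomomorphism $u:G\times H\to L$ is jointly continuous in each of the following cases: (i) $H$ is locally compact; (ii) $G$ and $H$ are first countable.
   Context: All groups are abelian. A convergence structure on a set $X$ assigns to each $x$ a collection of filters converging to $x$. This assignment must satisfy three conditions: point ultrafilters converge to their point; finite intersections of filters converging to $x$ converge to $x$; and finer filters of convergent filters converge. A map is continuous if it sends filters converging to $x$ to filters converging to the image of $x$. A convergence group is an abelian group with a convergence structure such that $\mathcal F\to x$, $\mathcal G\to y$ imply $\mathcal F-\mathcal G\to x-y$. Topological groups are convergence groups. $G\times H$ carries the product convergence structure, in which a filter converges iff its projections converge. A convergence space is Hausdorff if limits are unique. A subset $K$ is compact if every ultrafilter containing $K$ converges to a point of $K$. A convergence space is locally compact if it is Hausdorff and each convergent filter contains a compact set. A convergence space is first countable if for every filter $\mathcal F\to x$ there is a filter $\mathcal V\subseteq\mathcal F$ with a countable base such that $\mathcal V\to x$. $\mathbb T=\mathbb R/\mathbb Z$, $\mathbb T_+=\rho([-1/4,1/4])$ where $\rho:\mathbb R\to\mathbb T$ is the quotient map. $\Gamma G$ is the group of continuous homomorphisms $G\to\mathbb T$, and $\Gamma_s G$ is $\Gamma G$ with the topology of pointwise convergence. A set $M\subseteq\Gamma G$ is equicontinuous if for every filter $\mathcal F\to0$ in $G$, the filter generated by $\{\varphi(x):\varphi\in M,x\in F\}$, $F\in\mathcal F$, converges to $0$. $G$ is $g$-barrelled if every compact subset of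 $\Gamma_s G$ is equicontinuous. A subset $A$ of a topological group $L$ is quasi-convex if for every $x\notin A$ there is a continuous character $\varphi$ with $\varphi(A)\subseteq\mathbb T_+$, $\varphi(x)\notin\mathbb T_+$. $L$ is locally quasi-convex if it has a zero neighbourhood base of quasi-convex sets. A bihomomorphism is a map that is a homomorphism in each variable. It is separately continuous if it is continuous in each variable separately. *)

(* Defs.v *)
From Stdlib Require Import Reals.
From mathcomp Require Import all_boot all_algebra.
Set Implicit Arguments. Unset Strict Implicit. Unset Printing Implicit Defensive.
Import GRing.Theory.

Definition set (X : Type) := X -> Prop.

Definition is_filter {X : Type} (F : set (set X)) : Prop :=
  F (fun _ => True) /\ ~ F (fun _ => False) /\
  (forall A B, F A -> F B -> F (fun x => A x /\ B x)) /\
  (forall A B : set X, (forall x, A x -> B x) -> F A -> F B).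

Definition is_ultrafilter {X : Type} (U : set (set X)) : Prop :=
  is_filter U /\ forall A : set X, U A \/ U (fun x => ~ A x).

Definition point_filter {X : Type} (x : X) : set (set X) := fun A => A x.

Definition filter_inter {X : Type} (F G : set (set X)) : set (set X) :=
  fun A => F A /\ G A.

Definition finer {X : Type} (F G : set (set X)) : Prop := forall A, F A -> G A.

(* image filter f(F) (generated by the f(A), A in F) *)
Definition fmap {X Y : Type} (f : X -> Y) (F : set (set X)) : set (set Y) :=
  fun B => F (fun x => B (f x)).

Definition has_countable_base {X : Type} (V : set (set X)) : Prop :=
  exists B : nat -> set X, (forall n, V (B n)) /\
    forall A, V A -> exists n, forall x, B n x -> A x.

Definition convergence (X : Type) := set (set X) -> X -> Prop.

Definition is_convergence {X : Type} (c : convergence X) : Prop :=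
  (forall F x, c F x -> is_filter F) /\
  (forall x, c (point_filter x) x) /\
  (forall F G x, c F x -> c G x -> c (filter_inter F G) x) /\
  (forall F G x, is_filter G -> finer F G -> c F x -> c G x).

Definition continuous {X Y : Type} (cX : convergence X) (cY : convergence Y)
  (f : X -> Y) : Prop :=
  forall F x, cX F x -> cY (fmap f F) (f x).

Definition hausdorff {X : Type} (c : convergence X) : Prop :=
  forall F x y, c F x -> c F y -> x = y.

Definition compact_in {X : Type} (c : convergence X) (K : set X) : Prop :=
  forall U, is_ultrafilter U -> U K -> exists x, K x /\ c U x.

Definition locally_compact {X : Type} (c : convergence X) : Prop :=
  hausdorff c /\ forall F x, c F x -> exists K, compact_in c K /\ F K.

Definition first_countable {X : Type} (c : convergence X) : Prop :=
  forall F x, c F x -> exists V, is_filter V /\ finer V F /\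
    has_countable_base V /\ c V x.

Definition prod_conv {X Y : Type} (cX : convergence X) (cY : convergence Y)
  : convergence (X * Y) :=
  fun F p => is_filter F /\ cX (fmap fst F) p.1 /\ cY (fmap snd F) p.2.

Local Open Scope ring_scope.

Definition filter_sub {G : zmodType} (F H : set (set G)) : set (set G) :=
  fun C => exists A B, F A /\ H B /\ forall a b, A a -> B b -> C (a - b).

Definition is_conv_group {G : zmodType} (c : convergence G) : Prop :=
  is_convergence c /\
  forall F H x y, c F x -> c H y -> c (filter_sub F H) (x - y).

Local Close Scope ring_scope.
Local Open Scope R_scope.

(* T represented by the representatives in [0,1) *)
Definition T : Type := {r : R | r >= 0 /\ r < 1}.

Definition rho (r : R) : T := exist _ (frac_part r) (base_fp r).

Definition T0 : T := rho 0.
Definition Tadd (a b : T) : T := rho (proj1_sig a + proj1_sig b).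

Definition tdist (a b : T) : R :=
  let d := Rabs (proj1_sig a - proj1_sig b) in Rmin d (1 - d).

Definition Tconv : convergence T :=
  fun F t => is_filter F /\ forall eps, 0 < eps -> F (fun s => tdist s t < eps).

Definition Tplus (t : T) : Prop :=
  exists r, - (1/4) <= r <= 1/4 /\ rho r = t.

Local Close Scope R_scope.
Local Open Scope ring_scope.

Definition is_hom_T {G : zmodType} (phi : G -> T) : Prop :=
  forall x y, phi (x + y) = Tadd (phi x) (phi y).

Definition in_Gamma {G : zmodType} (c : convergence G) (phi : G -> T) : Prop :=
  is_hom_T phi /\ continuous c Tconv phi.

Definition pointwise_conv {G : zmodType} : convergence (G -> T) :=
  fun U phi => is_filter U /\ forall x, Tconv (fmap (fun psi => psi x) U) (phi x).

Definition compact_Gamma_s {G : zmodType} (c : convergence G) (M : set (G -> T)) : Prop :=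
  (forall phi, M phi -> in_Gamma c phi) /\ compact_in pointwise_conv M.

Definition equicontinuous {G : zmodType} (c : convergence G) (M : set (G -> T)) : Prop :=
  forall F, c F 0 ->
    (* the filter generated by the sets {phi x | phi in M, x in A}, A in F,
       converges to 0 in T: every basic 0-neighbourhood of T contains such a set *)
    forall eps : R, Rlt 0 eps ->
      exists A, F A /\ forall phi x, M phi -> A x -> Rlt (tdist (phi x) T0) eps.

Definition g_barrelled {G : zmodType} (c : convergence G) : Prop :=
  forall M, compact_Gamma_s c M -> equicontinuous c M.

Definition is_topology {X : Type} (op : set (set X)) : Prop :=
  op (fun _ => True) /\
  (forall U V, op U -> op V -> op (fun x => U x /\ V x)) /\
  (forall (I : Type) (Uf : I -> set X), (forall i, op (Uf i)) ->
      op (fun x => exists i, Uf i x)).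

Definition is_top_group {L : zmodType} (op : set (set L)) : Prop :=
  is_topology op /\
  forall x y U, op U -> U (x - y) ->
    exists V W, op V /\ op W /\ V x /\ W y /\
      forall a b, V a -> W b -> U (a - b).

Definition top_conv {X : Type} (op : set (set X)) : convergence X :=
  fun F x => is_filter F /\ forall U, op U -> U x -> F U.

Definition nbhd {X : Type} (op : set (set X)) (x : X) (A : set X) : Prop :=
  exists U, op U /\ U x /\ forall y, U y -> A y.

Definition quasi_convex {L : zmodType} (op : set (set L)) (A : set L) : Prop :=
  forall x, ~ A x -> exists phi : L -> T,
    is_hom_T phi /\ continuous (top_conv op) Tconv phi /\
    (forall a, A a -> Tplus (phi a)) /\ ~ Tplus (phi x).

Definition locally_quasi_convex {L : zmodType} (op : set (set L)) : Prop :=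
  forall U, nbhd op 0 U -> exists V, nbhd op 0 V /\ quasi_convex op V /\
    forall y, V y -> U y.

Definition bihom {G H L : zmodType} (u : G * H -> L) : Prop :=
  (forall x1 x2 y, u (x1 + x2, y) = u (x1, y) + u (x2, y)) /\
  (forall x y1 y2, u (x, y1 + y2) = u (x, y1) + u (x, y2)).

Definition sep_continuous {G H L : zmodType} (cG : convergence G) (cH : convergence H)
  (cL : convergence L) (u : G * H -> L) : Prop :=
  (forall x, continuous cH cL (fun y => u (x, y))) /\
  (forall y, continuous cG cL (fun x => u (x, y))).

(* Main.v *)
Require Import Defs.
From Stdlib Require Import Reals Lra Lia ZArith ProofIrrelevance ClassicalEpsilon Classical.
From mathcomp Require Import all_boot all_algebra.

Delimit Scope Z_scope with Z.
Local Open Scope R_scope.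

Definition val (t : T) : R := proj1_sig t.

Lemma val_range (t : T) : 0 <= val t < 1.
Proof. destruct t as [v [h0 h1]]; simpl; lra. Qed.

Lemma frac_uniq (r : R) (z : Z) : 0 <= r - IZR z < 1 -> frac_part r = r - IZR z.
Proof.
  intros H. unfold frac_part. destruct (base_Int_part r) as [h1 h2].
  assert (A : (Int_part r < z + 1)%Z).
  { apply lt_IZR. rewrite plus_IZR. simpl. lra. }
  assert (B : (z < Int_part r + 1)%Z).
  { apply lt_IZR. rewrite plus_IZR. simpl. lra. }
  assert (Int_part r = z) by lia. subst. reflexivity.
Qed.

Lemma val_rho (r : R) : exists z, val (rho r) = r - IZR z.
Proof. exists (Int_part r). reflexivity. Qed.

Lemma T_eq (a b : T) : val a = val b -> a = b.
Proof. destruct a, b; simpl; intros; subst; apply subset_eq_compat; reflexivity. Qed.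

Lemma rho_val (t : T) : rho (val t) = t.
Proof.
  apply T_eq. unfold rho; simpl. rewrite (frac_uniq (val t) 0).
  - simpl; ring.
  - pose proof (val_range t). simpl. lra.
Qed.

Lemma val_T0 : val T0 = 0.
Proof. unfold T0, rho, val; simpl. rewrite (frac_uniq 0 0); simpl; lra. Qed.

Lemma Rabs_bd (x : R) : Rabs x < 1 -> 0 <= Rmin (Rabs x) (1 - Rabs x).
Proof. intros. pose proof (Rabs_pos x). unfold Rmin; destruct Rle_dec; lra. Qed.

Lemma td_alt (a b : T) : tdist a b = Rmin (Rabs (val a - val b)) (1 - Rabs (val a - val b)).
Proof. reflexivity. Qed.

Lemma td_le (a b : T) (z : Z) : tdist a b <= Rabs (val a - val b - IZR z).
Proof.
  rewrite td_alt. pose proof (val_range a); pose proof (val_range b).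
  set (x := val a - val b).
  assert (Hx : -1 < x < 1) by (unfold x; lra).
  destruct (Z.lt_trichotomy z 0) as [Hz|[Hz|Hz]].
  - assert (IZR z <= -1) by (apply (IZR_le z (-1)); lia).
    eapply Rle_trans; [apply Rmin_r|].
    unfold Rabs; destruct (Rcase_abs x); destruct (Rcase_abs (x - IZR z)); lra.
  - subst. simpl. replace (x - 0) with x by ring. apply Rmin_l.
  - assert (1 <= IZR z) by (apply (IZR_le 1 z); lia).
    eapply Rle_trans; [apply Rmin_r|].
    unfold Rabs; destruct (Rcase_abs x); destruct (Rcase_abs (x - IZR z)); lra.
Qed.

Lemma td_eq (a b : T) : exists z, tdist a b = Rabs (val a - val b - IZR z).
Proof.
  rewrite td_alt. pose proof (val_range a); pose proof (val_range b).
  set (x := val a - val b).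
  assert (Hx : -1 < x < 1) by (unfold x; lra).
  unfold Rmin; destruct (Rle_dec (Rabs x) (1 - Rabs x)).
  - exists 0%Z. simpl. f_equal. ring.
  - destruct (Rcase_abs x).
    + exists (-1)%Z. simpl. unfold Rabs in *; destruct (Rcase_abs x); destruct (Rcase_abs (x - -1)); lra.
    + exists 1%Z. simpl. unfold Rabs in *; destruct (Rcase_abs x); destruct (Rcase_abs (x - 1)); lra.
Qed.

Lemma td_nonneg (a b : T) : 0 <= tdist a b.
Proof.
  rewrite td_alt. apply Rabs_bd. pose proof (val_range a); pose proof (val_range b).
  unfold Rabs; destruct Rcase_abs; lra.
Qed.

Lemma td_sym (a b : T) : tdist a b = tdist b a.
Proof. rewrite !td_alt. rewrite (Rabs_minus_sym (val a)). reflexivity. Qed.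

Lemma td_self (a : T) : tdist a a = 0.
Proof. apply Rle_antisym; [|apply td_nonneg]. eapply Rle_trans; [apply (td_le a a 0)|].
  simpl. replace (val a - val a - 0) with 0 by ring. rewrite Rabs_R0. lra. Qed.

Lemma td_tri (a b c : T) : tdist a c <= tdist a b + tdist b c.
Proof.
  destruct (td_eq a b) as [z1 H1]; destruct (td_eq b c) as [z2 H2].
  eapply Rle_trans; [apply (td_le a c (z1 + z2)%Z)|]. rewrite H1 H2 plus_IZR.
  replace (val a - val c - (IZR z1 + IZR z2)) with ((val a - val b - IZR z1) + (val b - val c - IZR z2)) by ring.
  apply Rabs_triang.
Qed.

Lemma td_rho (r s : R) : tdist (rho r) (rho s) <= Rabs (r - s).
Proof.
  destruct (val_rho r) as [z1 H1]; destruct (val_rho s) as [z2 H2].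
  eapply Rle_trans; [apply (td_le _ _ (z2 - z1)%Z)|]. rewrite H1 H2 minus_IZR.
  right. f_equal. ring.
Qed.

Lemma Tadd_cont (a b a' b' : T) : tdist (Tadd a b) (Tadd a' b') <= tdist a a' + tdist b b'.
Proof.
  destruct (td_eq a a') as [z1 H1]; destruct (td_eq b b') as [z2 H2].
  unfold Tadd. fold (val a) (val b) (val a') (val b').
  destruct (val_rho (val a + val b)) as [k1 K1]; destruct (val_rho (val a' + val b')) as [k2 K2].
  eapply Rle_trans; [apply (td_le _ _ (z1 + z2 - k1 + k2)%Z)|]. rewrite K1 K2 H1 H2.
  rewrite plus_IZR minus_IZR plus_IZR.
  replace (val a + val b - IZR k1 - (val a' + val b' - IZR k2) - (IZR z1 + IZR z2 - IZR k1 + IZR k2))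
    with ((val a - val a' - IZR z1) + (val b - val b' - IZR z2)) by ring.
  apply Rabs_triang.
Qed.

Lemma Tadd_T0 (t : T) : Tadd T0 t = t.
Proof. unfold Tadd. fold (val T0) (val t). rewrite val_T0 Rplus_0_l. apply rho_val. Qed.

Lemma Tadd_tri (a b c : T) : tdist (Tadd a b) c <= tdist a T0 + tdist b c.
Proof.
  eapply Rle_trans; [apply (td_tri _ (Tadd T0 b))|].
  rewrite Tadd_T0. pose proof (Tadd_cont a b T0 b). rewrite Tadd_T0 td_self in H. lra.
Qed.

Lemma Tplus_iff (t : T) : Tplus t <-> tdist t T0 <= 1/4.
Proof.
  split.
  - intros [r [Hr E]]. subst. unfold T0. eapply Rle_trans; [apply td_rho|].
    unfold Rabs; destruct Rcase_abs; lra.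
  - intros H. destruct (td_eq t T0) as [z Hz]. rewrite Hz val_T0 in H.
    exists (val t - IZR z). split.
    + unfold Rabs in H; destruct Rcase_abs; lra.
    + apply T_eq. unfold rho, val at 1; simpl. rewrite (frac_uniq _ (- z)).
      * rewrite opp_IZR; ring.
      * rewrite opp_IZR. pose proof (val_range t). lra.
Qed.

Lemma td_zero (a b : T) : tdist a b = 0 -> a = b.
Proof.
  rewrite td_alt. intros H. apply T_eq. pose proof (val_range a); pose proof (val_range b).
  assert (Rabs (val a - val b) < 1) by (unfold Rabs; destruct Rcase_abs; lra).
  revert H. unfold Rmin; destruct Rle_dec; intros H.
  - unfold Rabs in H; destruct Rcase_abs in H; lra.
  - lra.
Qed.

Lemma Z_ne0 (z : Z) : z <> 0%Z -> 1 <= Rabs (IZR z).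
Proof.
  intros H. destruct (Z.lt_trichotomy z 0) as [Hz|[Hz|Hz]].
  - assert (IZR z <= -1) by (apply (IZR_le z (-1)); lia). unfold Rabs; destruct Rcase_abs; lra.
  - contradiction.
  - assert (1 <= IZR z) by (apply (IZR_le 1 z); lia). unfold Rabs; destruct Rcase_abs; lra.
Qed.

Lemma td_double (t : T) : tdist t T0 <= 1/4 -> 2 * tdist t T0 <= tdist (Tadd t t) T0.
Proof.
  intros H. destruct (td_eq t T0) as [n Hn]. destruct (td_eq (Tadd t t) T0) as [m Hm].
  rewrite Hn in H |- *. rewrite Hm. rewrite !val_T0 in H, Hn, Hm |- *.
  unfold Tadd. fold (val t). destruct (val_rho (val t + val t)) as [k K]. rewrite K.
  set (v := val t) in *.
  destruct (Z.eq_dec (k + m) (2 * n)) as [E|E].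
  - replace (v + v - IZR k - 0 - IZR m) with (2 * (v - 0 - IZR n)).
    + rewrite Rabs_mult (Rabs_right 2); lra.
    + replace (IZR n) with (IZR (2*n) / 2) by (rewrite mult_IZR; field).
      rewrite <- E, plus_IZR. field.
  - assert (Hz : 1 <= Rabs (IZR (k + m - 2 * n))) by (apply Z_ne0; lia).
    rewrite minus_IZR plus_IZR mult_IZR in Hz.
    assert (Hb : Rabs (2 * (v - 0 - IZR n)) <= 1/2) by (rewrite Rabs_mult (Rabs_right 2); lra).
    pose proof (Rabs_triang (IZR k + IZR m - 2 * IZR n - (v + v - IZR k - 0 - IZR m)) (v + v - IZR k - 0 - IZR m)) as Tr.
    replace (IZR k + IZR m - 2 * IZR n - (v + v - IZR k - 0 - IZR m) + (v + v - IZR k - 0 - IZR m)) with (IZR k + IZR m - 2 * IZR n) in Tr by ring.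
    rewrite Rabs_minus_sym in Tr.
    replace (v + v - IZR k - 0 - IZR m - (IZR k + IZR m - 2 * IZR n)) with
      (2 * (v - 0 - IZR n) - 2 * (IZR k + IZR m - 2 * IZR n)) in Tr by ring.
    rewrite Rabs_mult (Rabs_right 2) in Hb; [|lra].
    assert (Rabs (v + v - IZR k - 0 - IZR m) >= 1/2).
    { pose proof (Rabs_triang (2 * (v - 0 - IZR n)) (-(v + v - IZR k - 0 - IZR m))) as T2.
      replace (2 * (v - 0 - IZR n) + - (v + v - IZR k - 0 - IZR m)) with (IZR k + IZR m - 2 * IZR n) in T2 by ring.
      rewrite Rabs_Ropp Rabs_mult (Rabs_right 2) in T2; lra. }
    lra.
Qed.

Lemma filter_ne {X : Type} (F : set (set X)) (A : set X) : is_filter F -> F A -> exists x, A x.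
Proof.
  intros [H1 [H2 [H3 H4]]] HA. apply NNPP. intros N. apply H2.
  apply (H4 A); [|exact HA]. intros x Ax. apply N. exists x. exact Ax.
Qed.

Lemma filter_mono {X : Type} (F : set (set X)) (A B : set X) : is_filter F -> F A -> (forall x, A x -> B x) -> F B.
Proof. intros [H1 [H2 [H3 H4]]] HA HAB. exact (H4 A B HAB HA). Qed.

Lemma filter_and {X : Type} (F : set (set X)) (A B : set X) : is_filter F -> F A -> F B -> F (fun x => A x /\ B x).
Proof. intros [H1 [H2 [H3 H4]]]. apply H3. Qed.

Lemma filter_true {X : Type} (F : set (set X)) : is_filter F -> F (fun _ => True).
Proof. intros [H1 _]. exact H1. Qed.

Lemma fmap_filter {X Y : Type} (f : X -> Y) (F : set (set X)) : is_filter F -> is_filter (fmap f F).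
Proof.
  intros [H1 [H2 [H3 H4]]]. unfold fmap. repeat split.
  - exact H1.
  - exact H2.
  - intros A B HA HB. exact (H3 _ _ HA HB).
  - intros A B HAB HA. apply (H4 _ _ (fun x => HAB (f x)) HA).
Qed.

Lemma fmap_ultra {X Y : Type} (f : X -> Y) (U : set (set X)) : is_ultrafilter U -> is_ultrafilter (fmap f U).
Proof.
  intros [HF HU]. split; [apply fmap_filter; exact HF|].
  intros A. unfold fmap. destruct (HU (fun x => A (f x))) as [h|h]; [left|right]; exact h.
Qed.

Lemma T_compact (U : set (set T)) : is_ultrafilter U -> exists t, Tconv U t.
Proof.
  intros [HF HU].
  set (E := fun r => r <= 1 /\ ~ U (fun t => val t < r)).
  assert (bE : bound E) by (exists 1; intros r [h _]; exact h).
  assert (E0 : E 0).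
  { split; [lra|]. intros H. destruct (filter_ne _ _ HF H) as [t Ht].
    pose proof (val_range t); lra. }
  destruct (completeness E bE (ex_intro _ 0 E0)) as [c [Hub Hlub]].
  assert (c0 : 0 <= c) by (apply Hub; exact E0).
  assert (c1 : c <= 1) by (apply Hlub; intros r [h _]; exact h).
  assert (Lo : forall eps, 0 < eps -> U (fun t => c - eps <= val t)).
  { intros eps He.
    assert (NB : ~ is_upper_bound E (c - eps)) by (intros Hb; specialize (Hlub _ Hb); lra).
    unfold is_upper_bound in NB. apply not_all_ex_not in NB. destruct NB as [r Hr].
    apply imply_to_and in Hr. destruct Hr as [[Er1 Er2] Hr].
    destruct (HU (fun t => val t < c - eps)) as [h|h].
    - exfalso. apply Er2. apply (filter_mono _ _ _ HF h). intros t Ht. lra.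
    - apply (filter_mono _ _ _ HF h). intros t Ht. lra. }
  assert (Hi : forall eps, 0 < eps -> U (fun t => val t < c + eps)).
  { intros eps He. destruct (Rle_dec (c + eps) 1) as [h|h].
    - apply NNPP. intros N. assert (E (c + eps)) by (split; assumption).
      specialize (Hub _ H). lra.
    - apply (filter_mono _ _ _ HF (filter_true _ HF)). intros t _.
      pose proof (val_range t). lra. }
  exists (rho c). split; [exact HF|]. intros eps He.
  apply (filter_mono _ _ _ HF (filter_and _ _ _ HF (Lo (eps/2) ltac:(lra)) (Hi (eps/2) ltac:(lra)))).
  intros s [h1 h2]. rewrite <- (rho_val s). eapply Rle_lt_trans; [apply td_rho|].
  unfold Rabs; destruct Rcase_abs; lra.
Qed.

Lemma Tconv_unique (F : set (set T)) (a b : T) : Tconv F a -> Tconv F b -> a = b.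
Proof.
  intros [HF Ha] [_ Hb]. apply td_zero.
  destruct (Rle_lt_or_eq_dec 0 (tdist a b) (td_nonneg a b)) as [h|h]; [|symmetry; exact h].
  exfalso. set (e := tdist a b / 2).
  destruct (filter_ne _ _ HF (filter_and _ _ _ HF (Ha e ltac:(unfold e; lra)) (Hb e ltac:(unfold e; lra))))
    as [s [s1 s2]].
  pose proof (td_tri a s b). rewrite (td_sym a s) in H. unfold e in *. lra.
Qed.

Local Close Scope R_scope.
Import GRing.Theory.
Local Open Scope ring_scope.

Lemma nbhd_open {X : Type} (op : set (set X)) (U : set X) x : op U -> U x -> nbhd op x U.
Proof. intros. exists U. auto. Qed.

Lemma nbhd_mono {X : Type} (op : set (set X)) x (A B : set X) :
  nbhd op x A -> (forall y, A y -> B y) -> nbhd op x B.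
Proof. intros [U [h1 [h2 h3]]] h. exists U. auto. Qed.

Lemma nbhd_and {L : zmodType} (op : set (set L)) x (A B : set L) : is_top_group op ->
  nbhd op x A -> nbhd op x B -> nbhd op x (fun y => A y /\ B y).
Proof.
  intros [[_ [Hi _]] _] [U [h1 [h2 h3]]] [U' [h1' [h2' h3']]].
  exists (fun y => U y /\ U' y). split; [apply Hi; assumption|]. split; [auto|].
  intros y [a b]; auto.
Qed.

Lemma conv_nbhd {X : Type} (op : set (set X)) F x A : top_conv op F x -> nbhd op x A -> F A.
Proof.
  intros [HF H] [U [h1 [h2 h3]]]. apply (filter_mono _ _ _ HF (H U h1 h2)). exact h3.
Qed.

Lemma nbhd_neg0 {L : zmodType} (op : set (set L)) (A : set L) : is_top_group op ->
  nbhd op 0 A -> nbhd op 0 (fun w => A (- w)).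
Proof.
  intros Htg [U [h1 [h2 h3]]]. destruct Htg as [_ Hs].
  assert (U (0 - 0)) by (rewrite subrr; exact h2).
  destruct (Hs 0 0 U h1 H) as [V [W [oV [oW [V0 [W0 HVW]]]]]].
  exists W. split; [exact oW|]. split; [exact W0|].
  intros y Wy. apply h3. rewrite -sub0r. apply HVW; assumption.
Qed.

Lemma nbhd_dbl {L : zmodType} (op : set (set L)) (A : set L) : is_top_group op ->
  nbhd op 0 A -> nbhd op 0 (fun w => A (w + w)).
Proof.
  intros Htg [U [h1 [h2 h3]]]. pose proof Htg as [_ Hs].
  assert (U (0 - 0)) by (rewrite subrr; exact h2).
  destruct (Hs 0 0 U h1 H) as [V [W [oV [oW [V0 [W0 HVW]]]]]].
  assert (N : nbhd op 0 (fun w => W (- w))) by (apply nbhd_neg0; [exact Htg| exact (nbhd_open _ _ _ oW W0)]).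
  apply (nbhd_mono _ _ _ _ (nbhd_and _ _ _ _ Htg (nbhd_open _ _ _ oV V0) N)).
  intros y [a b]. apply h3. rewrite -{2}(opprK y). apply HVW; assumption.
Qed.

Lemma nbhd_trans {L : zmodType} (op : set (set L)) (W : set L) z : is_top_group op ->
  nbhd op 0 W -> nbhd op z (fun l => W (l - z)).
Proof.
  intros [_ Hs] [U [h1 [h2 h3]]].
  assert (U (z - z)) by (rewrite subrr; exact h2).
  destruct (Hs z z U h1 H) as [V [W' [oV [oW [Vz [Wz HVW]]]]]].
  exists V. split; [exact oV|]. split; [exact Vz|]. intros y Vy. apply h3. apply HVW; assumption.
Qed.

Lemma add_conv {L : zmodType} {X : Type} (op : set (set L)) (F : set (set X)) f g a b :
  is_top_group op -> is_filter F -> top_conv op (fmap f F) a -> top_conv op (fmap g F) b ->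
  top_conv op (fmap (fun q => f q + g q) F) (a + b).
Proof.
  intros [Ht Hs] HF [_ Hf] [_ Hg]. split; [apply fmap_filter; exact HF|].
  intros U oU Uab. assert (U (a - - b)) by (rewrite opprK; exact Uab).
  destruct (Hs a (- b) U oU H) as [V [W [oV [oW [Va [Wb HVW]]]]]].
  assert (W (0 - b)) by (rewrite sub0r; exact Wb).
  destruct (Hs 0 b W oW H0) as [V1 [W1 [oV1 [oW1 [V10 [W1b H1]]]]]].
  apply (filter_mono _ _ _ HF (filter_and _ _ _ HF (Hf V oV Va) (Hg W1 oW1 W1b))).
  intros q [h1 h2]. rewrite -(opprK (g q)). apply HVW; [exact h1|].
  rewrite -sub0r. apply H1; assumption.
Qed.

Lemma const_conv {L : zmodType} {X : Type} (op : set (set L)) (F : set (set X)) c :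
  is_filter F -> top_conv op (fmap (fun _ => c) F) c.
Proof.
  intros HF. split; [apply fmap_filter; exact HF|]. intros U _ Uc.
  apply (filter_mono _ _ _ HF (filter_true _ HF)). intros; exact Uc.
Qed.

Lemma conv_ext {L : zmodType} {X : Type} (op : set (set L)) (F : set (set X)) f g a :
  is_filter F -> (forall q, f q = g q) -> top_conv op (fmap f F) a -> top_conv op (fmap g F) a.
Proof.
  intros HF E [_ H]. split; [apply fmap_filter; exact HF|]. intros U oU Ua.
  apply (filter_mono _ _ _ HF (H U oU Ua)). intros q. rewrite E. auto.
Qed.

Fixpoint Dn {L : zmodType} (A : set L) (n : nat) : set L :=
  match n with
  | O => A
  | S k => fun w => A w /\ Dn A k (w + w)
  end.

Lemma Dn_nbhd {L : zmodType} (op : set (set L)) (A : set L) n : is_top_group op ->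
  nbhd op 0 A -> nbhd op 0 (Dn A n).
Proof.
  intros Htg HA. revert A HA. induction n as [|n IH]; intros A HA; [exact HA|].
  simpl. apply nbhd_and; [exact Htg|exact HA|].
  apply (nbhd_dbl _ (Dn A n) Htg). apply IH. exact HA.
Qed.

Definition Pset {L : zmodType} (V : set L) (chi : L -> T) : Prop :=
  is_hom_T chi /\ forall v, V v -> Tplus (chi v).

Lemma Dn_bound {L : zmodType} (A : set L) (chi : L -> T) k w : Pset A chi ->
  Dn A k w -> Rle (tdist (chi w) T0) (Rmult (/4) (pow (/2) k)).
Proof.
  intros [Hh HA]. revert w. induction k as [|k IH]; intros w Hw.
  - pose proof (proj1 (Tplus_iff _) (HA w Hw)). simpl. lra.
  - destruct Hw as [Aw Dw]. specialize (IH _ Dw). rewrite Hh in IH.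
    pose proof (proj1 (Tplus_iff _) (HA w Aw)) as h.
    pose proof (td_double _ h). simpl. lra.
Qed.

Lemma P_equi {L : zmodType} (op : set (set L)) (V : set L) : is_top_group op -> nbhd op 0 V ->
  forall eps, Rlt 0 eps -> exists W, nbhd op 0 W /\
    forall chi, Pset V chi -> forall w, W w -> Rlt (tdist (chi w) T0) eps.
Proof.
  intros Htg HV eps He.
  destruct (pow_lt_1_zero (/2) ltac:(rewrite Rabs_right; lra) eps He) as [N HN].
  specialize (HN N (le_n N)). rewrite Rabs_right in HN; [|left; apply pow_lt; lra].
  exists (Dn V N). split; [apply Dn_nbhd; assumption|].
  intros chi Hc w Hw. pose proof (Dn_bound _ _ _ _ Hc Hw).
  pose proof (pow_lt (/2) N ltac:(lra)). lra.
Qed.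

Lemma P_cont {L : zmodType} (op : set (set L)) (V : set L) chi : is_top_group op -> nbhd op 0 V ->
  Pset V chi -> continuous (top_conv op) Tconv chi.
Proof.
  intros Htg HV Hc F z Hz. pose proof Hz as [HF _]. split; [apply fmap_filter; exact HF|].
  intros eps He. destruct (P_equi _ _ Htg HV eps He) as [W [HW HWb]].
  apply (filter_mono _ _ _ HF (conv_nbhd _ _ _ _ Hz (nbhd_trans _ _ z Htg HW))).
  intros l Wl. rewrite -(subrK z l). destruct Hc as [Hh HP].
  rewrite Hh. eapply Rle_lt_trans; [apply Tadd_tri|]. rewrite td_self.
  pose proof (HWb chi (conj Hh HP) _ Wl). lra.
Qed.

Lemma P_compact {L : zmodType} (V : set L) : compact_in pointwise_conv (Pset V).
Proof.
  intros U HU HP. pose proof HU as [HF _].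
  set (chi0 := fun l => epsilon (inhabits T0) (fun t => Tconv (fmap (fun chi : L -> T => chi l) U) t)).
  assert (Hc : forall l, Tconv (fmap (fun chi : L -> T => chi l) U) (chi0 l)).
  { intros l. unfold chi0. apply epsilon_spec. apply T_compact. apply fmap_ultra. exact HU. }
  exists chi0. split; [|split; [exact HF| exact Hc]]. split.
  - intros x y. apply (Tconv_unique (fmap (fun chi : L -> T => chi (x + y)) U)); [apply Hc|].
    split; [apply fmap_filter; exact HF|]. intros eps He.
    destruct (Hc x) as [_ Hx]. destruct (Hc y) as [_ Hy].
    apply (filter_mono _ _ _ HF (filter_and _ _ _ HF HP (filter_and _ _ _ HF (Hx (Rdiv eps 2) ltac:(lra)) (Hy (Rdiv eps 2) ltac:(lra))))).
    intros chi [[Hh _] [h1 h2]]. rewrite Hh. eapply Rle_lt_trans; [apply Tadd_cont|]. lra.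
  - intros v Vv. apply Tplus_iff. apply Rnot_lt_le. intros h.
    destruct (Hc v) as [_ Hv].
    destruct (filter_ne _ _ HF (filter_and _ _ _ HF HP (Hv (Rminus (tdist (chi0 v) T0) (Rinv 4)) ltac:(lra)))) as [chi [[_ HPc] h1]].
    pose proof (proj1 (Tplus_iff _) (HPc v Vv)).
    pose proof (td_tri (chi0 v) (chi v) T0). rewrite (td_sym (chi0 v) (chi v)) in H0. lra.
Qed.

Lemma bihom_0r {G H L : zmodType} (u : G * H -> L) x : bihom u -> u (x, 0) = 0.
Proof.
  intros [_ h2]. specialize (h2 x 0 0). rewrite addr0 in h2.
  apply (addrI (u (x, 0))). rewrite -h2 addr0. reflexivity.
Qed.

Lemma bihom_0l {G H L : zmodType} (u : G * H -> L) y : bihom u -> u (0, y) = 0.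
Proof.
  intros [h1 _]. specialize (h1 0 0 y). rewrite addr0 in h1.
  apply (addrI (u (0, y))). rewrite -h1 addr0. reflexivity.
Qed.

Definition MK {G H L : zmodType} (u : G * H -> L) (V : set L) (K : set H) : set (G -> T) :=
  fun psi => exists chi b, Pset V chi /\ K b /\ psi = fun x => chi (u (x, b)).

Lemma MK_compact {G H L : zmodType} (cG : convergence G) (cH : convergence H)
  (op : set (set L)) (u : G * H -> L) (V : set L) (K : set H) :
  is_top_group op -> nbhd op 0 V -> bihom u -> sep_continuous cG cH (top_conv op) u ->
  compact_in cH K -> compact_Gamma_s cG (MK u V K).
Proof.
  intros Htg HV Hb [Hs1 Hs2] HK. split.
  - intros psi [chi [b [Hc [Kb E]]]]. subst psi. split.
    + intros x1 x2. destruct Hb as [h1 _]. rewrite h1. destruct Hc as [Hh _]. apply Hh.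
    + intros F x Hx. exact (P_cont _ _ _ Htg HV Hc _ _ (Hs2 b F x Hx)).
  - intros U HU HM. pose proof HU as [HF _].
    set (sel := fun psi : G -> T => epsilon (inhabits ((fun _ : L => T0), (0 : H)))
       (fun p : (L -> T) * H => Pset V p.1 /\ K p.2 /\ psi = fun x => p.1 (u (x, p.2)))).
    assert (Hsel : forall psi, MK u V K psi ->
      Pset V (sel psi).1 /\ K (sel psi).2 /\ psi = fun x => (sel psi).1 (u (x, (sel psi).2))).
    { intros psi [chi [b [h1 [h2 h3]]]]. unfold sel. apply epsilon_spec.
      exists (chi, b). simpl. auto. }
    set (U1 := fmap (fun psi => (sel psi).1) U).
    set (U2 := fmap (fun psi => (sel psi).2) U).
    assert (U1P : U1 (Pset V)).
    { unfold U1, fmap. apply (filter_mono _ _ _ HF HM). intros psi h. apply (Hsel _ h). }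
    assert (U2K : U2 K).
    { unfold U2, fmap. apply (filter_mono _ _ _ HF HM). intros psi h. apply (Hsel _ h). }
    destruct (P_compact V U1 (fmap_ultra _ _ HU) U1P) as [chi0 [Pc0 [_ Hpw]]].
    destruct (HK U2 (fmap_ultra _ _ HU) U2K) as [b0 [Kb0 Hb0]].
    exists (fun x => chi0 (u (x, b0))). split; [exists chi0, b0; auto|].
    split; [exact HF|]. intros x. split; [apply fmap_filter; exact HF|].
    intros eps He. destruct (P_equi _ _ Htg HV (Rdiv eps 2) ltac:(lra)) as [W [HW HWb]].
    pose proof (conv_nbhd _ _ _ _ (Hs1 x U2 b0 Hb0) (nbhd_trans _ _ (u (x, b0)) Htg HW)) as C1.
    destruct (Hpw (u (x, b0))) as [_ C2]. specialize (C2 _ (ltac:(lra) : Rlt 0 (Rdiv eps 2))).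
    unfold U2, U1, fmap in *.
    apply (filter_mono _ _ _ HF (filter_and _ _ _ HF HM (filter_and _ _ _ HF C1 C2))).
    intros psi [Mpsi [h1 h2]]. destruct (Hsel _ Mpsi) as [HPs [_ E]].
    rewrite E. simpl.
    rewrite -(subrK (u (x, b0)) (u (x, (sel psi).2))).
    destruct HPs as [Hh HPs']. rewrite Hh.
    eapply Rle_lt_trans; [apply Tadd_tri|].
    pose proof (HWb _ (conj Hh HPs') _ h1). lra.
Qed.

Lemma key {G H L : zmodType} (cG : convergence G) (cH : convergence H)
  (op : set (set L)) (u : G * H -> L) (V : set L) (K : set H) (FG : set (set G)) :
  is_top_group op -> nbhd op 0 V -> quasi_convex op V -> bihom u ->
  sep_continuous cG cH (top_conv op) u -> g_barrelled cG ->
  compact_in cH K -> cG FG 0 ->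
  exists A, FG A /\ forall a b, A a -> K b -> V (u (a, b)).
Proof.
  intros Htg HV Hq Hb Hs Hgb HK HFG.
  destruct (Hgb _ (MK_compact cG cH op u V K Htg HV Hb Hs HK) FG HFG (Rinv 4) ltac:(lra)) as [A [HA HAb]].
  exists A. split; [exact HA|]. intros a b Aa Kb. apply NNPP. intros nV.
  destruct (Hq _ nV) as [phi [Hh [_ [HP nT]]]]. apply nT. apply Tplus_iff.
  assert (M : MK u V K (fun x => phi (u (x, b)))) by (exists phi, b; split; [split; assumption|auto]).
  pose proof (HAb _ a M Aa). simpl in H0. lra.
Qed.

Fixpoint capn {X : Type} (B : nat -> set X) (n : nat) : set X :=
  match n with
  | O => B O
  | S k => fun x => capn B k x /\ B (S k) x
  end.

Lemma capn_sub {X : Type} (B : nat -> set X) n x : capn B n x -> B n x.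
Proof. destruct n; simpl; [auto| intros [_ h]; exact h]. Qed.

Lemma capn_dec {X : Type} (B : nat -> set X) n m x : (n <= m)%coq_nat -> capn B m x -> capn B n x.
Proof.
  intros Hnm. induction Hnm as [|m Hnm IH]; [auto|]. simpl. intros [h _]. exact (IH h).
Qed.

Lemma capn_filter {X : Type} (F : set (set X)) (B : nat -> set X) n :
  is_filter F -> (forall k, F (B k)) -> F (capn B n).
Proof.
  intros HF HB. induction n as [|n IH]; simpl; [apply HB|]. apply filter_and; auto.
Qed.

Lemma seq_compact {X : Type} (c : convergence X) (VH : set (set X)) (ys : nat -> X)
  (Bb : nat -> set X) y0 :
  is_convergence c -> c VH y0 -> (forall A, VH A -> exists n, forall x, Bb n x -> A x) ->
  (forall n m x, (n <= m)%coq_nat -> Bb m x -> Bb n x) -> (forall n, Bb n (ys n)) ->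
  compact_in c (fun y => y = y0 \/ exists n, y = ys n).
Proof.
  intros Hc HV Hbase Hdec Hys U HU HK. pose proof HU as [HF HUl].
  destruct Hc as [_ [Hpt [_ Hfin]]].
  destruct (classic (exists z, (z = y0 \/ exists n, z = ys n) /\ U (fun y => y = z))) as [[z [Kz Uz]]|Hn].
  - exists z. split; [exact Kz|]. apply (Hfin (point_filter z)); [exact HF| |apply Hpt].
    intros A Az. apply (filter_mono _ _ _ HF Uz). intros y ->. exact Az.
  - exists y0. split; [left; reflexivity|]. apply (Hfin VH); [exact HF| |exact HV].
    assert (Nz : forall z, (z = y0 \/ exists n, z = ys n) -> U (fun y => y <> z)).
    { intros z Kz. destruct (HUl (fun y => y = z)) as [h|h]; [|exact h].
      exfalso. apply Hn. exists z. auto. }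
    assert (Fin : forall N, U (fun y => forall m, (m < N)%coq_nat -> y <> ys m)).
    { induction N as [|N IH].
      - apply (filter_mono _ _ _ HF (filter_true _ HF)). intros y _ m Hm. lia.
      - apply (filter_mono _ _ _ HF (filter_and _ _ _ HF IH (Nz (ys N) (or_intror (ex_intro _ N erefl))))).
        intros y [h1 h2] m Hm. destruct (Nat.eq_dec m N) as [->|ne]; [exact h2|]. apply h1. lia. }
    intros A HA. destruct (Hbase A HA) as [N HN].
    apply (filter_mono _ _ _ HF (filter_and _ _ _ HF HK (filter_and _ _ _ HF (Nz y0 (or_introl erefl)) (Fin N)))).
    intros y [[->|[n ->]] [h1 h2]]; [exfalso; apply h1; reflexivity|].
    apply HN. destruct (Nat.lt_ge_cases n N) as [l|l].
    + exfalso. exact (h2 n l erefl).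
    + apply (Hdec N n); [exact l| apply Hys].
Qed.

Lemma core {G H L : zmodType} (cG : convergence G) (cH : convergence H)
  (op : set (set L)) (u : G * H -> L) (F' : set (set (G * H))) :
  is_conv_group cG -> is_conv_group cH -> g_barrelled cG ->
  is_top_group op -> locally_quasi_convex op ->
  bihom u -> sep_continuous cG cH (top_conv op) u ->
  (locally_compact cH \/ (first_countable cG /\ first_countable cH)) ->
  is_filter F' -> cG (fmap fst F') 0 -> cH (fmap snd F') 0 -> top_conv op (fmap u F') 0.
Proof.
  intros HGg HHg Hgb Htg Hlqc Hb Hs Hcase HF HFG HFH.
  split; [apply fmap_filter; exact HF|]. intros U oU U0.
  destruct (Hlqc U (nbhd_open _ _ _ oU U0)) as [V [HV [Hq HVU]]].
  assert (Ex : exists A B, fmap fst F' A /\ fmap snd F' B /\ forall a b, A a -> B b -> V (u (a, b))).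
  { destruct Hcase as [Hlc | [Hfg Hfh]].
    - destruct Hlc as [_ Hlc]. destruct (Hlc _ _ HFH) as [K [HK FK]].
      destruct (key cG cH op u V K (fmap fst F') Htg HV Hq Hb Hs Hgb HK HFG) as [A [HA HAb]].
      exists A, K. auto.
    - destruct (Hfg _ _ HFG) as [VG [HVGf [finG [[Ag [HAg HAgb]] cVG]]]].
      destruct (Hfh _ _ HFH) as [VH [HVHf [finH [[Bg [HBg HBgb]] cVH]]]].
      apply NNPP. intro N.
      assert (bad : forall n, exists p : G * H, capn Ag n p.1 /\ capn Bg n p.2 /\ ~ V (u p)).
      { intro n. apply NNPP. intro N2. apply N. exists (capn Ag n), (capn Bg n).
        split; [apply finG; apply capn_filter; assumption|].
        split; [apply finH; apply capn_filter; assumption|].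
        intros a b ha hb. apply NNPP. intro nv. apply N2. exists (a, b). simpl. auto. }
      set (ps := fun n => proj1_sig (constructive_indefinite_description _ (bad n))).
      assert (Hps : forall n, capn Ag n (ps n).1 /\ capn Bg n (ps n).2 /\ ~ V (u (ps n))).
      { intro n. exact (proj2_sig (constructive_indefinite_description _ (bad n))). }
      assert (HK : compact_in cH (fun y => y = 0 \/ exists n, y = (ps n).2)).
      { apply (seq_compact cH VH (fun n => (ps n).2) (capn Bg) 0).
        - exact (proj1 HHg).
        - exact cVH.
        - intros A HA. destruct (HBgb A HA) as [n Hn]. exists n. intros x hx. apply Hn. apply capn_sub. exact hx.
        - intros n m x hnm. apply capn_dec. exact hnm.
        - intro n. apply (Hps n). }
      destruct (key cG cH op u V _ VG Htg HV Hq Hb Hs Hgb HK cVG) as [A [HA HAb]].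
      destruct (HAgb A HA) as [n Hn].
      destruct (Hps n) as [h1 [h2 h3]]. apply h3.
      replace (ps n) with ((ps n).1, (ps n).2) by (destruct (ps n); reflexivity).
      apply HAb.
      + apply Hn. apply capn_sub. exact h1.
      + right. exists n. reflexivity. }
  destruct Ex as [A [B [HA [HB HAB]]]].
  apply (filter_mono _ _ _ HF (filter_and _ _ _ HF HA HB)).
  intros [a b] [ha hb]. apply HVU. apply HAB; assumption.
Qed.

Lemma shift_conv {G : zmodType} {X : Type} (cG : convergence G) (F : set (set X)) (f : X -> G) x :
  is_conv_group cG -> is_filter F -> cG (fmap f F) x -> cG (fmap (fun q => f q - x) F) 0.
Proof.
  intros [Hc Hsub] HF Hx. destruct Hc as [_ [Hpt [_ Hfin]]].
  pose proof (Hsub _ _ _ _ Hx (Hpt x)) as H. rewrite subrr in H.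
  refine (Hfin _ _ _ (fmap_filter _ _ HF) _ H).
  intros C [A [B [HA [HB HAB]]]]. unfold fmap in *.
  apply (filter_mono _ _ _ HF HA). intros q hq. apply HAB; [exact hq| exact HB].
Qed.

Theorem theorem3p3 (G H L : zmodType) (cG : convergence G) (cH : convergence H)
  (opL : set (set L)) (u : G * H -> L) :
  is_conv_group cG -> is_conv_group cH -> g_barrelled cG ->
  is_top_group opL -> locally_quasi_convex opL ->
  bihom u -> sep_continuous cG cH (top_conv opL) u ->
  (locally_compact cH \/ (first_countable cG /\ first_countable cH)) ->
  continuous (prod_conv cG cH) (top_conv opL) u.
Proof.
  intros HGg HHg Hgb Htg Hlqc Hb Hs Hcase F [x y] [HF [H1 H2]]. simpl in H1, H2.
  set (F' := fmap (fun q : G * H => (q.1 - x, q.2 - y)) F).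
  assert (HF' : is_filter F') by (apply fmap_filter; exact HF).
  assert (G1 : cG (fmap fst F') 0) by (exact (shift_conv cG F fst x HGg HF H1)).
  assert (G2 : cH (fmap snd F') 0) by (exact (shift_conv cH F snd y HHg HF H2)).
  pose proof (core cG cH opL u F' HGg HHg Hgb Htg Hlqc Hb Hs Hcase HF' G1 G2) as T1.
  pose proof (proj2 Hs y _ _ G1) as T2. simpl in T2. rewrite (bihom_0l u y Hb) in T2.
  pose proof (proj1 Hs x _ _ G2) as T3. simpl in T3. rewrite (bihom_0r u x Hb) in T3.
  pose proof (const_conv opL F (u (x, y)) HF) as T4.
  pose proof (add_conv opL F _ _ _ _ Htg HF (add_conv opL F _ _ _ _ Htg HF T1 T2)
                (add_conv opL F _ _ _ _ Htg HF T3 T4)) as TT.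
  rewrite !add0r in TT.
  refine (conv_ext _ _ _ _ _ HF _ TT).
  intros [a b]. simpl. destruct Hb as [Hb1 Hb2].
  symmetry. rewrite -{1}(subrK x a) -{1}(subrK y b) Hb1 !Hb2. reflexivity.
Qed.
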